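(* Let $\tilde F=[\tilde{\mathbf{f}}_1,\dots,\tilde{\mathbf{f}}_K]\in\mathbb{R}^{n\times K}$, $\eta>0$, and $B=(b_{jl}):=(\tilde F^\top\tilde F+\eta I)^{-1}$. Then the $j$-th column of $\tilde FB$ is $$[\tilde FB]_j=b_{jj}\tilde{\mathbf{f}}_j+\sum_{l\ne j}b_{jl}\tilde{\mathbf{f}}_l,$$ and for every $l\ne j$, $$\mathrm{sign}(b_{jl})=-\mathrm{sign}\big(\tilde{\mathbf{f}}_j^\top P_{\eta,-jl}\tilde{\mathbf{f}}_l\big),$$ where $P_{\eta,-jl}:=I-\tilde F_{-jl}(\tilde F_{-jl}^\top\tilde F_{-jl}+\eta I)^{-1}\tilde F_{-jl}^\top$ and $\tilde F_{-jl}$ is $\tilde F$ with the $j$-th and $l$-th columns removed.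
   Context: In the paper, $\tilde F=(I-\mathbf{1}\mathbf{1}^\top/n)\sigma(XW)$ is the centered hidden-layer activation matrix of a 2-layer network with $K$ hidden neurons and $\eta$ is the weight decay. *)

(* Defs.v *)
From HB Require Import structures.
From mathcomp Require Import all_boot all_order all_algebra.
Set Implicit Arguments. Unset Strict Implicit. Unset Printing Implicit Defensive.
Import Order.TTheory GRing.Theory Num.Theory.
Local Open Scope ring_scope.

(* Indices of the columns kept after removing columns j and l of an n x K
   matrix, in increasing order: the i-th element of
   [k in 'I_K | k != j and k != l]. When j != l this list has exactly K-2
   elements, so [rem_idx j l] enumerates them (the default j is never used). *)
Definition rem_idx (K : nat) (j l : 'I_K) (i : 'I_(K - 2)) : 'I_K :=
  nth j [seq k <- enum 'I_K | (k != j) && (k != l)] i.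

Definition remove_cols2 (R : Type) (n K : nat) (j l : 'I_K)
    (F : 'M[R]_(n, K)) : 'M[R]_(n, K - 2) :=
  colsub (rem_idx j l) F.

Definition P_eta (R : comUnitRingType) (n K : nat) (eta : R) (j l : 'I_K)
    (F : 'M[R]_(n, K)) : 'M[R]_n :=
  let G := remove_cols2 j l F in
  1%:M - G *m invmx (G^T *m G + eta%:M) *m G^T.

(* Main.v *)
Require Import Defs.
From HB Require Import structures.
From mathcomp Require Import all_boot all_order all_algebra.
From mathcomp Require Import ring lra zify.
Import Order.TTheory GRing.Theory Num.Theory.
Set Implicit Arguments. Unset Strict Implicit.
Local Open Scope ring_scope.

Section Aux.
Variable R : realFieldType.

Lemma sqn_ge0 m (u : 'cV[R]_m) : 0 <= (u^T *m u) 0 0.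
Proof.
rewrite mxE; apply: sumr_ge0 => i _; rewrite mxE; by rewrite -expr2 sqr_ge0.
Qed.

Lemma sqn_eq0 m (u : 'cV[R]_m) : (u^T *m u) 0 0 = 0 -> u = 0.
Proof.
rewrite mxE => /eqP; rewrite psumr_eq0; last by move=> i _; rewrite mxE -expr2 sqr_ge0.
move=> /allP H; apply/matrixP => i k; rewrite (ord1 k) !mxE.
have := H i (mem_index_enum _); rewrite mxE mulf_eq0 orbb => /eqP //.
Qed.

Lemma gram_unit n m (G : 'M[R]_(n, m)) (eta : R) : 0 < eta ->
  G^T *m G + eta%:M \in unitmx.
Proof.
move=> he; rewrite unitmxE unitfE; apply/negP => /det0P [v nz0 hv].
have h1 : ((G *m v^T)^T *m (G *m v^T)) 0 0 + eta * ((v^T)^T *m v^T) 0 0 = 0.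
  have e : v *m (G^T *m G + eta%:M) *m v^T = (v *m G^T *m (G *m v^T)) + eta *: (v *m v^T).
    by rewrite mulmxDr mulmxDl mul_mx_scalar -!scalemxAl !mulmxA.
  have := congr1 (fun M : 'M[R]_1 => M 0 0) e; rewrite hv mul0mx [X in _ = X]mxE [X in _ = _ + X]mxE.
  by rewrite trmx_mul !trmxK !mulmxA => <-; rewrite mxE.
have a := sqn_ge0 (G *m v^T); have b := sqn_ge0 v^T.
have : ((v^T)^T *m v^T) 0 0 = 0 by nra.
move=> /sqn_eq0 /(congr1 trmx); rewrite trmxK trmx0 => E; by rewrite E eqxx in nz0.
Qed.




Lemma eD m n (A B : 'M[R]_(m, n)) i k : (A + B) i k = A i k + B i k.
Proof. by rewrite mxE. Qed.
Lemma eB m n (A B : 'M[R]_(m, n)) i k : (A - B) i k = A i k - B i k.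
Proof. by rewrite !mxE. Qed.
Lemma eZ m n (a : R) (A : 'M[R]_(m, n)) i k : (a *: A) i k = a * A i k.
Proof. by rewrite mxE. Qed.
Lemma eT m n (A : 'M[R]_(m, n)) i k : A^T i k = A k i.
Proof. by rewrite mxE. Qed.

Lemma Nsym n m (G : 'M[R]_(n, m)) (eta : R) :
  (invmx (G^T *m G + eta%:M))^T = invmx (G^T *m G + eta%:M).
Proof. by rewrite trmx_inv linearD /= trmx_mul trmxK tr_scalar_mx. Qed.

Lemma qexp n (P : 'M[R]_n) (x y : 'cV[R]_n) (s t : R) :
  ((s *: x + t *: y)^T *m P *m (s *: x + t *: y)) 0 0 =
  s ^+ 2 * (x^T *m P *m x) 0 0 + s * t * ((x^T *m P *m y) 0 0 + (y^T *m P *m x) 0 0)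
  + t ^+ 2 * (y^T *m P *m y) 0 0.
Proof.
rewrite [(_ + _)^T]linearD /= ![(_ *: _)^T]linearZ /=.
rewrite !(mulmxDl, mulmxDr) -!scalemxAl -!scalemxAr -?scalemxAl.
rewrite !eD !eZ; ring.
Qed.

Lemma tr11 (A : 'M[R]_1) : A^T 0 0 = A 0 0.
Proof. by rewrite mxE. Qed.

Lemma GtP n m (G : 'M[R]_(n, m)) (eta : R) : 0 < eta ->
  G^T *m (1%:M - G *m invmx (G^T *m G + eta%:M) *m G^T)
  = eta *: (invmx (G^T *m G + eta%:M) *m G^T).
Proof.
move=> he; have uN := gram_unit G he.
set N := G^T *m G + eta%:M; set H := invmx N.
have NH : N *m H = 1%:M by rewrite mulmxV.
have GGH : G^T *m G *m H = 1%:M - eta *: H.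
  by rewrite -NH /N mulmxDl mul_scalar_mx addrK.
rewrite mulmxBr mulmx1 !mulmxA GGH mulmxBl mul1mx -scalemxAl.
by rewrite opprB addrC subrK.
Qed.

Lemma q_ge0 n m (G : 'M[R]_(n, m)) (eta : R) (x : 'cV[R]_n) : 0 < eta ->
  0 <= (x^T *m (1%:M - G *m invmx (G^T *m G + eta%:M) *m G^T) *m x) 0 0.
Proof.
move=> he; have uN := gram_unit G he.
set N := G^T *m G + eta%:M; set H := invmx N.
set z := H *m (G^T *m x).
have Nz : N *m z = G^T *m x by rewrite /z mulKVmx.
have e1 : x^T *m (1%:M - G *m H *m G^T) *m x = x^T *m x - x^T *m (G *m z).
  by rewrite mulmxBr mulmx1 mulmxBl /z !mulmxA.
clearbody z.
have e2 : z^T *m (N *m z) = (G *m z)^T *m (G *m z) + eta *: (z^T *m z).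
  by rewrite /N mulmxDl mulmxDr mul_scalar_mx -scalemxAr trmx_mul !mulmxA.
have e3 : z^T *m (G^T *m x) = ((x^T *m (G *m z)))^T.
  by rewrite !trmx_mul trmxK mulmxA.
have e4 : (x - G *m z)^T *m (x - G *m z) =
   x^T *m x - x^T *m (G *m z) - ((x^T *m (G *m z)))^T + (G *m z)^T *m (G *m z).
  rewrite [(x - _)^T]linearB /= !mulmxBl !mulmxBr [(x^T *m _)^T]trmx_mul trmxK opprB addrA; by rewrite addrAC.
have := sqn_ge0 (x - G *m z); have := sqn_ge0 z; have := sqn_ge0 (G *m z).
rewrite e4 e1 !eB eD !eB tr11.
have := congr1 (fun A : 'M[R]_1 => A 0 0) e2.
rewrite Nz e3 tr11 eD eZ => ->.
nra.
Qed.
End Aux.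
Section Sel.
Variables (K : nat) (j l : 'I_K).
Hypothesis hjl : l != j.

Let s := [seq k <- enum 'I_K | (k != j) && (k != l)].

Lemma uniq_s : uniq s.
Proof. by rewrite filter_uniq // enum_uniq. Qed.

Lemma size_s : size s = (K - 2)%N.
Proof.
move: (card_uniqP uniq_s) => <-.
have -> : #|s| = #|[pred k : 'I_K | (k != j) && (k != l)]|.
  by apply: eq_card => k; rewrite mem_filter mem_enum andbT.
have := cardC [pred k : 'I_K | (k == j) || (k == l)].
rewrite card_ord.
have -> : #|[pred k : 'I_K | (k == j) || (k == l)]| = 2%N.
  have := card2 j l; rewrite eq_sym hjl => <-; apply: eq_card => k.
  by rewrite !inE.
have -> : #|[predC [pred k : 'I_K | (k == j) || (k == l)]]| =
          #|[pred k : 'I_K | (k != j) && (k != l)]|.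
  by apply: eq_card => k; rewrite !inE negb_or.
move: #|[pred k : 'I_K | (k != j) && (k != l)]| => x; lia.
Qed.

Lemma r_in (i : 'I_(K - 2)) : rem_idx j l i \in s.
Proof. by rewrite /rem_idx mem_nth // size_s. Qed.

Lemma r_neq (i : 'I_(K - 2)) : (rem_idx j l i != j) && (rem_idx j l i != l).
Proof. have := r_in i; by rewrite mem_filter => /andP[]. Qed.

Lemma r_inj : injective (rem_idx j l).
Proof.
move=> a b; rewrite /rem_idx => /eqP.
rewrite (nth_uniq j (_ : (a < size s)%N) (_ : (b < size s)%N) uniq_s) ?size_s //.
by move/eqP/val_inj.
Qed.

Lemma r_surj (k : 'I_K) : k != j -> k != l -> exists i, rem_idx j l i = k.
Proof.
move=> h1 h2; have ks : k \in s by rewrite mem_filter h1 h2 mem_enum.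
have hi : (index k s < K - 2)%N by rewrite -size_s index_mem.
exists (Ordinal hi); by rewrite /rem_idx /= nth_index.
Qed.

Variable R : realFieldType.
Definition Esel : 'M[R]_(K, K - 2) := colsub (rem_idx j l) 1%:M.

Lemma Esel_E a i : Esel a i = (a == rem_idx j l i)%:R.
Proof. by rewrite !mxE. Qed.

Lemma remE n (F : 'M[R]_(n, K)) : remove_cols2 j l F = F *m Esel.
Proof. by rewrite /remove_cols2 /Esel mulmx_colsub mulmx1. Qed.

Lemma EtEj : Esel^T *m delta_mx j (0:'I_1) = 0.
Proof.
rewrite -colE; apply/matrixP => i k; rewrite !mxE.
by have /andP[h1 h2] := r_neq i; rewrite eq_sym (negbTE h1).
Qed.

Lemma EtEl : Esel^T *m delta_mx l (0:'I_1) = 0.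
Proof.
rewrite -colE; apply/matrixP => i k; rewrite !mxE.
by have /andP[h1 h2] := r_neq i; rewrite eq_sym (negbTE h2).
Qed.

Lemma complete :
  delta_mx j (0:'I_1) *m (delta_mx j (0:'I_1))^T + delta_mx l (0:'I_1) *m (delta_mx l (0:'I_1))^T
  + Esel *m Esel^T = 1%:M :> 'M[R]_K.
Proof.
rewrite !trmx_delta !mul_delta_mx; apply/matrixP => a b.
rewrite !mxE.
under eq_bigr => i _ do rewrite !mxE.
have [ea|nea] := eqVneq a j.
  subst a; rewrite /= (eq_sym j l) (negbTE hjl) /= big1.
    by rewrite !addr0 [b == _]eq_sym.
  move=> i _; have /andP[h1 h2] := r_neq i; by rewrite eq_sym (negbTE h1) mul0r.
have [eb|neb] := eqVneq a l.
  subst a; rewrite /= big1.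
    by rewrite add0r addr0 [b == _]eq_sym.
  move=> i _; have /andP[h1 h2] := r_neq i; by rewrite eq_sym (negbTE h2) mul0r.
rewrite /= !add0r.
have [i0 hi0] := r_surj nea neb.
rewrite (bigD1 i0) //= big1 ?addr0.
  by rewrite -hi0 eqxx /= mul1r [b == _]eq_sym.
move=> i ni; rewrite -hi0; case: eqP => [/r_inj e|]; last by rewrite mul0r.
by rewrite e eqxx in ni.
Qed.
End Sel.

Theorem mainTheorem8 (R : realFieldType) (n K : nat) (F : 'M[R]_(n, K))
    (eta : R) (heta : 0 < eta) :
  let B := invmx (F^T *m F + eta%:M) in
  (forall j : 'I_K,
     col j (F *m B) = B j j *: col j F + \sum_(l < K | l != j) B j l *: col l F)
  /\
  (forall j l : 'I_K, l != j ->
     Num.sg (B j l) = - Num.sg (((col j F)^T *m P_eta eta j l F *m col l F) 0 0)).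
Proof.
move=> B.
have Bsym : B^T = B by rewrite /B Nsym.
have Bs : forall i k, B i k = B k i by move=> i k; rewrite -{1}Bsym mxE.
have uM := gram_unit F heta.
split.
  move=> j.
  transitivity (\sum_l B j l *: col l F); last by rewrite (bigD1 j).
  apply/matrixP => a b; rewrite !mxE summxE; apply: eq_bigr => i _.
  by rewrite eZ mxE mulrC Bs.
move=> j l hlj.
set E := Esel j l R.
set G := remove_cols2 j l F.
have GE : G = F *m E := remE j l F.
set N := G^T *m G + eta%:M. set H := invmx N.
have uN : N \in unitmx := gram_unit G heta.
set P := 1%:M - G *m H *m G^T.
have -> : P_eta eta j l F = P by [].
set ej := delta_mx j (0:'I_1) : 'cV[R]_K.
set el := delta_mx l (0:'I_1) : 'cV[R]_K.
rewrite !colE -/ej -/el.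
set fj := F *m ej; set fl := F *m el.
set pjj := (fj^T *m P *m fj) 0 0; set pll := (fl^T *m P *m fl) 0 0.
set c := (fj^T *m P *m fl) 0 0.
have Psym : P^T = P.
  by rewrite /P linearB /= trmx1 !trmx_mul trmxK Nsym mulmxA.
have c' : (fl^T *m P *m fj) 0 0 = c.
  by rewrite -tr11 (trmx_mul (fl^T *m P) fj) (trmx_mul fl^T P) trmxK Psym mulmxA.
have qP : forall x : 'cV[R]_n, 0 <= (x^T *m P *m x) 0 0 by move=> x; exact: (q_ge0 G x heta).
have qj : 0 <= pjj := qP fj.
set a := pjj + eta; set d := pll + eta.
have qq := qP (- c *: fj + a *: fl); rewrite qexp c' -/pjj -/pll in qq.
set D := a * d - c ^+ 2.
have apos : 0 < a by rewrite /a; lra.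
have aD : 0 < a * D.
  have -> : a * D = ((- c) ^+ 2 * pjj + - c * a * (c + c) + a ^+ 2 * pll)
      + eta * (a ^+ 2 + c ^+ 2) by rewrite /D /d /a; ring.
  have h4 : 0 < eta * (a ^+ 2 + c ^+ 2).
    apply: mulr_gt0 => //; have := sqr_ge0 c; have : 0 < a ^+ 2 by rewrite exprn_gt0.
    lra.
  rewrite -/c in qq; lra.
have Dpos : 0 < D by nra.
have Dn0 : D != 0 by rewrite gt_eqF.
set al := - c / D; set be := a / D.
set u := al *: ej + be *: el. set y := F *m u.
set Z := H *m (G^T *m y).
set v := u + E *m (- Z).
have Fv : F *m v = P *m y.
  by rewrite /v mulmxDr mulmxA -GE /P mulmxBl mul1mx mulmxN /Z !mulmxA.
have decomp : forall z : 'cV[R]_K,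
    z = ej *m (ej^T *m z) + el *m (el^T *m z) + E *m (E^T *m z).
  by move=> z; rewrite !mulmxA -!mulmxDl complete // mul1mx.
have hy : y = al *: fj + be *: fl by rewrite /y /u mulmxDr -!scalemxAr.
have h1 : ej^T *m (F^T *m (P *m y)) = (al * pjj + be * c)%:M.
  rewrite mulmxA -trmx_mul -/fj hy !mulmxDr -!scalemxAr !mulmxA.
  apply/matrixP => i0 k0; rewrite !ord1 eD !eZ [in RHS]mxE eqxx mulr1n.
  by rewrite /pjj /c /fj /fl !mulmxA.
have h2 : el^T *m (F^T *m (P *m y)) = (al * c + be * pll)%:M.
  rewrite mulmxA -trmx_mul -/fl hy !mulmxDr -!scalemxAr !mulmxA.
  apply/matrixP => i0 k0; rewrite !ord1 eD !eZ [in RHS]mxE eqxx mulr1n.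
  by rewrite -c' /pll /fj /fl !mulmxA.
have h3 : E^T *m (F^T *m (P *m y)) = eta *: Z.
  by rewrite mulmxA -trmx_mul -GE mulmxA GtP // -scalemxAl -mulmxA.
have Mv : (F^T *m F + eta%:M) *m v = el.
  rewrite mulmxDl -mulmxA Fv mul_scalar_mx (decomp (F^T *m (P *m y))) h1 h2 h3.
  rewrite !mul_mx_scalar -scalemxAr /v /u mulmxN.
  have s1 : al * pjj + be * c = - (eta * al) by rewrite /al /be /a; field.
  have s2 : al * c + be * pll = 1 - eta * be by rewrite /al /be /D /d; field.
  rewrite s1 s2; move: (E *m Z) => EZ.
  apply/matrixP => i0 k0; rewrite !(eD, eZ, eB, mxE); ring.
have Bel : B *m el = v by rewrite -Mv /B mulKmx.
have -> : B j l = v j 0 by rewrite -Bel -colE mxE.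
have Ewj : (E *m (- Z)) j 0 = 0.
  have -> : (E *m (- Z)) j 0 = (ej^T *m (E *m (- Z))) 0 0.
    by rewrite /ej trmx_delta -rowE !mxE.
  by rewrite mulmxA -[ej^T *m E]trmxK trmx_mul trmxK EtEj // trmx0 mul0mx mxE.
rewrite /v /u !eD !eZ Ewj !mxE eqxx (eq_sym j l) (negbTE hlj) /= mulr1 mulr0 !addr0.
by rewrite /al mulNr sgrN sgrM sgrV (gtr0_sg Dpos) mulr1.
Qed.
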